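(* In the discrete-weight (geometric) model, let $\gamma>0$ be a fixed constant and let $\bar{\boldsymbol\theta}^*=\bar{\boldsymbol\theta}^*_n$ satisfy $q_n\le\bar\alpha_i^*+\bar\beta_j^*\le Q_n$ for all $i\ne j$, with $0<q_n\le Q_n$. Put $m_n=e^{Q_n}/(e^{Q_n}-1)^2$ and $M_n=e^{q_n}/(e^{q_n}-1)^2$ and assume $M_n/m_n=o(n)$. Suppose the realized degrees satisfy \[ \max\Bigl\{\max_{1\le i\le n}|d_i-\mathbb{E}(d_i)|,\ \max_{1\le j\le n}|b_j-\mathbb{E}(b_j)|\Bigr\}\le\sqrt{\frac{8(n-1)\log n}{\gamma q_n^2}} . \] Then, with an implicit constant depending only on $\gamma$, for all sufficiently large $n$, \[ r:=\bigl\|[F'(\bar{\boldsymbol\theta}^* )]^{-1}F(\bar{\boldsymbol\theta}^* )\bigr\|_\infty= O\Bigl(q_n^{-1}\bigl(e^{3Q_n}(1+q_n^{-4})+e^{Q_n}\bigr)\sqrt{\frac{\log n}{n}}\Bigr). \]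
   Context: Discrete-weight model: Let $n\ge2$. Parameters $\bar{\boldsymbol\theta}=(\bar\alpha_1,\dots,\bar\alpha_n,\bar\beta_1,\dots,\bar\beta_{n-1})^\top$, with $\bar\beta_n:=0$ and $\bar\alpha_i+\bar\beta_j>0$ for $i\ne j$. Under $\mathbb{P}_{\bar{\boldsymbol\theta}}$, $A=(a_{i,j})$ has $a_{i,i}=0$ and mutually independent entries $a_{i,j}$ ($i\ne j$) with $\mathbb{P}(a_{i,j}=a)=(1-e^{-(\bar\alpha_i+\bar\beta_j)})e^{-(\bar\alpha_i+\bar\beta_j)a}$, $a=0,1,2,\dots$. $d_i=\sum_{j\ne i}a_{i,j}$, $b_j=\sum_{i\ne j}a_{i,j}$; expectations are under $\mathbb{P}_{\bar{\boldsymbol\theta}^*}$. With $f(x)=1/(e^x-1)$, $F:\{\bar{\boldsymbol\theta}\}\to\mathbb{R}^{2n-1}$ is $F_i(\bar{\boldsymbol\theta})=d_i-\sum_{k\ne i}f(\bar\alpha_i+\bar\beta_k)$ ($i\le n$), $F_{n+j}(\bar{\boldsymbol\theta})=b_j-\sum_{k\ne j}f(\bar\alpha_k+\bar\beta_j)$ ($j\le n-1$), and $F'$ is its Jacobian matrix. *)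

(* Defs.v *)
From Stdlib Require Import Reals Lra Lia Arith List.
Open Scope R_scope.

Definition sumR (N : nat) (g : nat -> R) : R :=
  fold_right Rplus 0 (map g (seq 0 N)).

(* f(x) = 1/(e^x - 1); also the mean of a_{i,j} ~ Geom with parameter x. *)
Definition fgeo (x : R) : R := 1 / (exp x - 1).

(* Parameter vector theta : nat -> R, indices 0 .. 2n-2 (0-based):
   alpha_i = theta i (i < n), beta_j = theta (n + j) (j < n-1), beta_{n-1} := 0. *)
Definition alpha_of (theta : nat -> R) (i : nat) : R := theta i.
Definition beta_of (n : nat) (theta : nat -> R) (j : nat) : R :=
  if (j <? n - 1)%nat then theta (n + j)%nat else 0.

Definition outdeg (n : nat) (A : nat -> nat -> nat) (i : nat) : R :=
  sumR n (fun j => if (j =? i)%nat then 0 else INR (A i j)).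
Definition indeg (n : nat) (A : nat -> nat -> nat) (j : nat) : R :=
  sumR n (fun i => if (i =? j)%nat then 0 else INR (A i j)).

Definition Eoutdeg (n : nat) (theta : nat -> R) (i : nat) : R :=
  sumR n (fun k => if (k =? i)%nat then 0
                   else fgeo (alpha_of theta i + beta_of n theta k)).
Definition Eindeg (n : nat) (theta : nat -> R) (j : nat) : R :=
  sumR n (fun k => if (k =? j)%nat then 0
                   else fgeo (alpha_of theta k + beta_of n theta j)).

Definition Fmap (n : nat) (A : nat -> nat -> nat) (theta : nat -> R) (k : nat) : R :=
  if (k <? n)%nat then outdeg n A k - Eoutdeg n theta k
  else indeg n A (k - n) - Eindeg n theta (k - n).

Definition upd (theta : nat -> R) (l : nat) (t : R) : nat -> R :=
  fun m => if (m =? l)%nat then t else theta m.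

Definition is_jacobian (n : nat) (A : nat -> nat -> nat) (theta : nat -> R)
    (J : nat -> nat -> R) : Prop :=
  forall k l, (k < 2 * n - 1)%nat -> (l < 2 * n - 1)%nat ->
    derivable_pt_lim (fun t => Fmap n A (upd theta l t) k) (theta l) (J k l).

Definition is_inverse (N : nat) (J B : nat -> nat -> R) : Prop :=
  forall i k, (i < N)%nat -> (k < N)%nat ->
    sumR N (fun l => J i l * B l k) = (if (i =? k)%nat then 1 else 0) /\
    sumR N (fun l => B i l * J l k) = (if (i =? k)%nat then 1 else 0).

Definition m_n (Q : R) : R := exp Q / (exp Q - 1) ^ 2.
Definition M_n (q : R) : R := exp q / (exp q - 1) ^ 2.

Definition little_o_n (u : nat -> R) : Prop :=
  forall eps, 0 < eps -> exists N, forall n, (N <= n)%nat -> Rabs (u n) <= eps * INR n.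

(* Main.v *)
Require Import Defs.
From Stdlib Require Import Reals.
From Stdlib Require Import Lra Lia List FunctionalExtensionality.
From Coquelicot Require Import Coquelicot.
Open Scope R_scope.

Lemma sumR_0 g : sumR 0 g = 0.
Proof. reflexivity. Qed.

Lemma sumR_S (N : nat) (g : nat -> R) : sumR (S N) g = sumR N g + g N.
Proof.
unfold sumR. rewrite seq_S, map_app, fold_right_app. simpl.
rewrite Rplus_0_r. induction (map g (seq 0 N)) as [|a s IH]; simpl.
- ring.
- rewrite IH; ring.
Qed.

Lemma sumR_ext N f g : (forall i, (i < N)%nat -> f i = g i) -> sumR N f = sumR N g.
Proof.
induction N; intros H; [reflexivity|].
rewrite !sumR_S, IHN, H; [reflexivity|lia|intros; apply H; lia].
Qed.

Lemma sumR_plus N f g : sumR N (fun i => f i + g i) = sumR N f + sumR N g.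
Proof. induction N; [simpl; unfold sumR; simpl; ring|rewrite !sumR_S, IHN; ring]. Qed.

Lemma sumR_minus N f g : sumR N (fun i => f i - g i) = sumR N f - sumR N g.
Proof. induction N; [unfold sumR; simpl; ring|rewrite !sumR_S, IHN; ring]. Qed.

Lemma sumR_scal N c f : sumR N (fun i => c * f i) = c * sumR N f.
Proof. induction N; [unfold sumR; simpl; ring|rewrite !sumR_S, IHN; ring]. Qed.

Lemma sumR_scalr N c f : sumR N (fun i => f i * c) = sumR N f * c.
Proof. induction N; [unfold sumR; simpl; ring|rewrite !sumR_S, IHN; ring]. Qed.

Lemma sumR_opp N f : sumR N (fun i => - f i) = - sumR N f.
Proof. induction N; [unfold sumR; simpl; ring|rewrite !sumR_S, IHN; ring]. Qed.

Lemma sumR_zero N f : (forall i, (i < N)%nat -> f i = 0) -> sumR N f = 0.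
Proof. intros H. rewrite (sumR_ext N f (fun _ => 0)) by auto.
induction N; [reflexivity| rewrite sumR_S, IHN; [ring|intros; apply H; lia]]. Qed.

Lemma sumR_const N c : sumR N (fun _ => c) = INR N * c.
Proof. induction N; [unfold sumR; simpl; ring|rewrite sumR_S, IHN, S_INR; ring]. Qed.

Lemma sumR_le N f g : (forall i, (i < N)%nat -> f i <= g i) -> sumR N f <= sumR N g.
Proof.
induction N; intros H; [unfold sumR; simpl; lra|].
rewrite !sumR_S. assert (f N <= g N) by (apply H; lia).
assert (sumR N f <= sumR N g) by (apply IHN; intros; apply H; lia). lra.
Qed.

Lemma sumR_swap N M (h : nat -> nat -> R) :
  sumR N (fun i => sumR M (fun j => h i j)) = sumR M (fun j => sumR N (fun i => h i j)).
Proof.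
induction N.
- rewrite sumR_0. symmetry. apply sumR_zero. intros; apply sumR_0.
- rewrite sumR_S, IHN, <- sumR_plus. apply sumR_ext. intros. rewrite sumR_S. ring.
Qed.

Lemma sumR_delta N i x : (i < N)%nat ->
  sumR N (fun l => (if l =? i then 1 else 0) * x l) = x i.
Proof.
induction N; intros H; [lia|]. rewrite sumR_S.
destruct (Nat.eq_dec i N) as [->|ne].
- rewrite Nat.eqb_refl, sumR_zero; [ring|].
  intros l Hl. replace (l =? N) with false by (symmetry; apply Nat.eqb_neq; lia). ring.
- rewrite IHN by lia. replace (N =? i) with false by (symmetry; apply Nat.eqb_neq; lia). ring.
Qed.

Lemma sumR_ifnot N i g : (i < N)%nat ->
  sumR N (fun j => if j =? i then 0 else g j) = sumR N g - g i.
Proof.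
intros H.
rewrite (sumR_ext N _ (fun j => g j - (if j =? i then 1 else 0) * g j)).
- rewrite sumR_minus, sumR_delta by exact H. ring.
- intros j _. destruct (j =? i); ring.
Qed.

Lemma swap_offdiag n (h : nat -> nat -> R) :
  sumR n (fun i => sumR n (fun j => if j =? i then 0 else h i j)) =
  sumR n (fun j => sumR n (fun i => if i =? j then 0 else h i j)).
Proof.
rewrite sumR_swap. apply sumR_ext; intros j _. apply sumR_ext; intros i _.
rewrite Nat.eqb_sym. reflexivity.
Qed.

Lemma exists_max n (f : nat -> R) : (1 <= n)%nat ->
  exists i0, (i0 < n)%nat /\ forall i, (i < n)%nat -> f i <= f i0.
Proof.
induction n; intros H; [lia|].
destruct (Nat.eq_dec n 0) as [->|ne].
- exists 0%nat. split; [lia|]. intros i Hi. replace i with 0%nat by lia. lra.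
- destruct IHn as [i0 [Hi0 Hm]]; [lia|].
  destruct (Rle_dec (f n) (f i0)).
  + exists i0. split; [lia|]. intros i Hi. destruct (Nat.eq_dec i n) as [->|]; [lra|apply Hm; lia].
  + exists n. split; [lia|]. intros i Hi. destruct (Nat.eq_dec i n) as [->|]; [lra|].
    assert (f i <= f i0) by (apply Hm; lia). lra.
Qed.

Lemma abs_between a b : Rabs a <= b -> - b <= a <= b.
Proof. intros H. unfold Rabs in H. destruct (Rcase_abs a); lra. Qed.

Lemma neg_of_mul a V : 0 < V -> a * V <= 0 -> a <= 0.
Proof. intros HV H. destruct (Rle_dec a 0); [auto|]. assert (0 < a * V) by (apply Rmult_lt_0_compat; lra). lra. Qed.

Lemma principle (n : nat) (v : nat -> nat -> R) (m M E : R) (al be : nat -> R) :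
  (3 <= n)%nat -> 0 < m -> m <= M -> 0 <= E ->
  (forall i j, (i < n)%nat -> (j < n)%nat -> i <> j -> m <= v i j <= M) ->
  be (n - 1)%nat = 0 ->
  (forall i, (i < n)%nat -> Rabs (sumR n (fun j => if j =? i then 0 else v i j * (al i + be j))) <= E) ->
  (forall j, (j < n)%nat -> Rabs (sumR n (fun i => if i =? j then 0 else v i j * (al i + be j))) <= E) ->
  forall i, (i < n)%nat ->
    Rabs (al i) <= 10 * E * M / ((INR n - 1) * m * m) /\
    Rabs (be i) <= 10 * E * M / ((INR n - 1) * m * m).
Proof.
intros Hn Hm HmM HE Hv Hb Hr Hc.
assert (HnR : 3 <= INR n) by (replace 3 with (INR 3) by (simpl; ring); apply le_INR; lia).
set (nn := INR n - 1).
assert (Hnn : 2 <= nn) by (unfold nn; lra).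
set (e := E / (nn * m)).
set (rho := m / (nn * M)).
assert (HM : 0 < M) by lra.
assert (He : 0 <= e) by (unfold e; apply Rmult_le_pos; [lra|apply Rlt_le, Rinv_0_lt_compat, Rmult_lt_0_compat; lra]).
assert (Hrho : 0 < rho) by (unfold rho; apply Rmult_lt_0_compat; [lra|apply Rinv_0_lt_compat, Rmult_lt_0_compat; lra]).
assert (HeE : e * (nn * m) = E) by (unfold e; field; split; lra).
assert (HrhoM : rho * (nn * M) = m) by (unfold rho; field; split; lra).
assert (Hcnt : forall i c, (i < n)%nat -> sumR n (fun j => if j =? i then 0 else c) = nn * c).
{ intros i c Hi. rewrite sumR_ifnot by exact Hi. rewrite sumR_const. unfold nn; ring. }
assert (HV : forall i, (i < n)%nat ->
   nn * m <= sumR n (fun j => if j =? i then 0 else v i j) <= nn * M).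
{ intros i Hi. split.
  - rewrite <- (Hcnt i m Hi). apply sumR_le. intros j Hj.
    destruct (Nat.eqb_spec j i); [lra|]. apply Hv; auto.
  - rewrite <- (Hcnt i M Hi). apply sumR_le. intros j Hj.
    destruct (Nat.eqb_spec j i); [lra|]. apply Hv; auto. }
assert (HW : forall j, (j < n)%nat ->
   nn * m <= sumR n (fun i => if i =? j then 0 else v i j) <= nn * M).
{ intros j Hj. split.
  - rewrite <- (Hcnt j m Hj). apply sumR_le. intros i Hi.
    destruct (Nat.eqb_spec i j); [lra|]. apply Hv; auto.
  - rewrite <- (Hcnt j M Hj). apply sumR_le. intros i Hi.
    destruct (Nat.eqb_spec i j); [lra|]. apply Hv; auto. }
destruct (exists_max n al) as [i0 [Hi0 Hmax]]; [lia|].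
destruct (exists_max n (fun i => - al i)) as [i1 [Hi1 Hmin']]; [lia|].
assert (Hmin : forall i, (i < n)%nat -> al i1 <= al i) by (intros i Hi; specialize (Hmin' i Hi); simpl in Hmin'; lra).
set (ap := al i0). set (am := al i1).
assert (HB : forall j, (j < n)%nat -> am - e <= - be j <= ap + e).
{ intros j Hj. specialize (Hc j Hj). destruct (HW j Hj) as [W1 W2].
  set (W := sumR n (fun i => if i =? j then 0 else v i j)) in *.
  set (U := sumR n (fun i => if i =? j then 0 else v i j * al i)).
  assert (Hcid : sumR n (fun i => if i =? j then 0 else v i j * (al i + be j)) = U + be j * W).
  { unfold U, W. rewrite (Rmult_comm (be j)), <- sumR_scalr, <- sumR_plus.
    apply sumR_ext. intros i _. destruct (i =? j); ring. }
  rewrite Hcid in Hc. apply abs_between in Hc.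
  assert (HU1 : U <= ap * W).
  { unfold U, W. rewrite <- sumR_scal. apply sumR_le. intros i Hi.
    destruct (Nat.eqb_spec i j); [lra|]. destruct (Hv i j Hi Hj n0).
    assert (al i <= ap) by (apply Hmax; auto). nra. }
  assert (HU2 : am * W <= U).
  { unfold U, W. rewrite <- sumR_scal. apply sumR_le. intros i Hi.
    destruct (Nat.eqb_spec i j); [lra|]. destruct (Hv i j Hi Hj n0).
    assert (am <= al i) by (apply Hmin; auto). nra. }
  assert (HWp : 0 < W) by (apply Rlt_le_trans with (nn * m); [apply Rmult_lt_0_compat; lra|lra]).
  assert (HeW : E <= e * W) by (rewrite <- HeE; apply Rmult_le_compat_l; lra).
  split.
  - assert (am - e + be j <= 0); [|lra].
    apply (neg_of_mul _ W HWp). nra.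
  - assert (- be j - ap - e <= 0); [|lra].
    apply (neg_of_mul _ W HWp). nra. }
set (gp := ap + e). set (gm := am - e).
assert (Hb0 : am - e <= 0 <= ap + e) by (destruct (HB (n-1)%nat) as [H1 H2]; [lia|]; rewrite Hb in H1, H2; lra).
set (Sp := sumR n (fun j => gp + be j)).
set (Sm := sumR n (fun j => - be j - gm)).
assert (HSS : Sp + Sm = INR n * (gp - gm)).
{ unfold Sp, Sm. rewrite <- sumR_plus, <- sumR_const. apply sumR_ext. intros; ring. }
assert (HC : forall i, (i < n)%nat ->
   al i <= gp - rho * (Sp - (gp + be i)) + e /\ gm + rho * (Sm - (- be i - gm)) - e <= al i).
{ intros i Hi. specialize (Hr i Hi). destruct (HV i Hi) as [V1 V2].
  set (V := sumR n (fun j => if j =? i then 0 else v i j)) in *.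
  set (T := sumR n (fun j => if j =? i then 0 else v i j * be j)).
  assert (Hrid : sumR n (fun j => if j =? i then 0 else v i j * (al i + be j)) = al i * V + T).
  { unfold T, V. rewrite <- sumR_scal, <- sumR_plus.
    apply sumR_ext. intros j _. destruct (j =? i); ring. }
  rewrite Hrid in Hr. apply abs_between in Hr.
  assert (HVp : 0 < V) by (apply Rlt_le_trans with (nn * m); [apply Rmult_lt_0_compat; lra|lra]).
  assert (HeV : E <= e * V) by (rewrite <- HeE; apply Rmult_le_compat_l; lra).
  assert (HrV : rho * V <= m) by (rewrite <- HrhoM; apply Rmult_le_compat_l; lra).
  set (X := sumR n (fun j => if j =? i then 0 else gp + be j)).
  set (Y := sumR n (fun j => if j =? i then 0 else - be j - gm)).
  assert (HX : X = Sp - (gp + be i)) by (unfold X, Sp; apply sumR_ifnot; auto).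
  assert (HY : Y = Sm - (- be i - gm)) by (unfold Y, Sm; apply sumR_ifnot; auto).
  assert (HX0 : 0 <= X).
  { rewrite <- (sumR_zero n (fun _ => 0)) by auto. apply sumR_le. intros j Hj.
    destruct (j =? i); [lra|]. destruct (HB j Hj). unfold gp. lra. }
  assert (HY0 : 0 <= Y).
  { rewrite <- (sumR_zero n (fun _ => 0)) by auto. apply sumR_le. intros j Hj.
    destruct (j =? i); [lra|]. destruct (HB j Hj). unfold gm. lra. }
  assert (HT1 : - T <= gp * V - m * X).
  { unfold T, V, X. rewrite <- sumR_scal, <- sumR_scal, <- sumR_opp, <- sumR_minus.
    apply sumR_le. intros j Hj. destruct (Nat.eqb_spec j i); [lra|].
    destruct (Hv i j Hi Hj (not_eq_sym n0)). destruct (HB j Hj). unfold gp.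
    assert (0 <= (v i j - m) * (ap + e + be j)) by (apply Rmult_le_pos; lra). nra. }
  assert (HT2 : gm * V + m * Y <= - T).
  { unfold T, V, Y. rewrite <- sumR_scal, <- sumR_scal, <- sumR_opp, <- sumR_plus.
    apply sumR_le. intros j Hj. destruct (Nat.eqb_spec j i); [lra|].
    destruct (Hv i j Hi Hj (not_eq_sym n0)). destruct (HB j Hj). unfold gm.
    assert (0 <= (v i j - m) * (- be j - (am - e))) by (apply Rmult_le_pos; lra). nra. }
  rewrite <- HX, <- HY. split.
  - assert (al i - gp + rho * X - e <= 0); [|lra].
    apply (neg_of_mul _ V HVp).
    assert (0 <= X * (m - rho * V)) by (apply Rmult_le_pos; lra). nra.
  - assert (gm + rho * Y - e - al i <= 0); [|lra].
    apply (neg_of_mul _ V HVp).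
    assert (0 <= Y * (m - rho * V)) by (apply Rmult_le_pos; lra). nra. }
set (D := ap - am).
assert (HD0 : 0 <= D) by (unfold D, ap; apply Rge_le, Rge_minus, Rle_ge, Hmax; auto).
assert (Hgg : gp - gm = D + 2 * e) by (unfold gp, gm, D; ring).
assert (HDb : rho * (nn - 1) * D <= 4 * e).
{ destruct (HC i0 Hi0) as [H1 _]. destruct (HC i1 Hi1) as [_ H2].
  destruct (HB i0 Hi0). destruct (HB i1 Hi1).
  fold ap in H1. fold am in H2.
  assert (HXY : rho * (Sp - (gp + be i0)) + rho * (Sm - (- be i1 - gm)) >= rho * ((nn - 1) * (gp - gm))).
  { rewrite <- Rmult_plus_distr_l. apply Rle_ge, Rmult_le_compat_l; [lra|].
    unfold nn. unfold gp, gm in *. nra. }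
  assert (0 <= rho * (nn - 1) * (2 * e)) by (apply Rmult_le_pos; [apply Rmult_le_pos|]; lra).
  assert (Hex : rho * ((nn - 1) * (gp - gm)) = rho * (nn - 1) * D + rho * (nn - 1) * (2 * e)) by (rewrite Hgg; ring).
  assert (HDdef : D = ap - am) by reflexivity.
  lra. }
assert (HD : D <= 8 * e * M / m).
{ assert (Hk : rho * (nn - 1) * (8 * e * M / m) = 8 * e * (nn - 1) / nn) by (unfold rho; field; repeat split; lra).
  assert (4 * e <= 8 * e * (nn - 1) / nn).
  { replace (8 * e * (nn - 1) / nn) with (4 * e + 4 * e * ((nn - 2) / nn)) by (field; lra).
    assert (0 <= (nn - 2) / nn) by (apply Rmult_le_pos; [lra|apply Rlt_le, Rinv_0_lt_compat; lra]).
    assert (0 <= 4 * e * ((nn - 2) / nn)) by (apply Rmult_le_pos; lra). lra. }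
  assert (Hpos : 0 < rho * (nn - 1)) by (apply Rmult_lt_0_compat; lra).
  apply Rmult_le_reg_l with (rho * (nn - 1)); [exact Hpos|]. lra. }
assert (HMm : 1 <= M / m).
{ replace (M / m) with (1 + (M - m) / m) by (field; lra).
  assert (0 <= (M - m) / m) by (apply Rmult_le_pos; [lra|apply Rlt_le, Rinv_0_lt_compat; lra]). lra. }
assert (Hfin : 2 * e + 8 * e * M / m <= 10 * E * M / ((INR n - 1) * m * m)).
{ replace (10 * E * M / ((INR n - 1) * m * m)) with (10 * e * (M / m)) by (unfold e, nn; field; split; lra).
  replace (8 * e * M / m) with (8 * e * (M / m)) by (field; lra). nra. }
intros i Hi. destruct (HB i Hi). assert (al i <= ap) by (apply Hmax; auto). assert (am <= al i) by (apply Hmin; auto).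
assert (0 <= 8 * e * M / m) by lra.
assert (HDdef : D = ap - am) by reflexivity.
fold nn in Hfin. split; apply Rabs_le; lra.
Qed.

Definition gg (s : R) : R := exp s / (exp s - 1) ^ 2.

Lemma term_deriv s D x : 0 < s ->
  derivable_pt_lim (fun t => fgeo (s + D * (t - x))) x (- (gg s * D)).
Proof.
intros Hs. apply is_derive_Reals. unfold fgeo.
assert (Hne : exp s - 1 <> 0) by (assert (1 < exp s) by (rewrite <- exp_0; apply exp_increasing; lra); lra).
auto_derive.
- rewrite Rplus_opp_r, Rmult_0_r, Rplus_0_r. exact Hne.
- rewrite Rplus_opp_r, Rmult_0_r, Rplus_0_r. unfold gg. field. exact Hne.
Qed.

Lemma deriv_sum N (h : nat -> R -> R) (d : nat -> R) x :
  (forall j, (j < N)%nat -> derivable_pt_lim (h j) x (d j)) ->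
  derivable_pt_lim (fun t => sumR N (fun j => h j t)) x (sumR N d).
Proof.
induction N; intros H.
- rewrite sumR_0. replace (fun t => sumR 0 (fun j => h j t)) with (fun _ : R => 0).
  + apply derivable_pt_lim_const.
  + apply functional_extensionality; intros; reflexivity.
- rewrite sumR_S.
  replace (fun t => sumR (S N) (fun j => h j t)) with (fun t => sumR N (fun j => h j t) + h N t).
  + apply (derivable_pt_lim_plus (fun t => sumR N (fun j => h j t)) (h N)).
    * apply IHN; intros; apply H; lia.
    * apply H; lia.
  + apply functional_extensionality; intros; rewrite sumR_S; reflexivity.
Qed.

Definition Dl (n i j l : nat) : R :=
  (if l =? i then 1 else 0) + (if (j <? n - 1)%nat then (if l =? n + j then 1 else 0) else 0).

Definition Jac (n : nat) (th : nat -> R) (k l : nat) : R :=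
  if (k <? n)%nat then
    sumR n (fun j => if j =? k then 0 else gg (alpha_of th k + beta_of n th j) * Dl n k j l)
  else
    sumR n (fun i => if i =? (k - n) then 0 else gg (alpha_of th i + beta_of n th (k - n)) * Dl n i (k - n) l).

Lemma upd_lin n th l i j t :
  alpha_of (upd th l t) i + beta_of n (upd th l t) j =
  (alpha_of th i + beta_of n th j) + Dl n i j l * (t - th l).
Proof.
unfold alpha_of, beta_of, upd, Dl.
destruct (Nat.eqb_spec i l); destruct (Nat.eqb_spec l i); try congruence;
destruct (j <? n - 1)%nat;
try (destruct (Nat.eqb_spec (n + j) l); destruct (Nat.eqb_spec l (n + j)); try congruence);
subst; ring.
Qed.

Lemma term_deriv2 n th l i j : 0 < alpha_of th i + beta_of n th j ->
  derivable_pt_lim (fun t => fgeo (alpha_of (upd th l t) i + beta_of n (upd th l t) j)) (th l)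
    (- (gg (alpha_of th i + beta_of n th j) * Dl n i j l)).
Proof.
intros H.
replace (fun t => fgeo (alpha_of (upd th l t) i + beta_of n (upd th l t) j))
  with (fun t => fgeo ((alpha_of th i + beta_of n th j) + Dl n i j l * (t - th l))).
- apply term_deriv; exact H.
- apply functional_extensionality; intros t; rewrite upd_lin; reflexivity.
Qed.

Lemma jac_ok n A th :
  (forall i j, (i < n)%nat -> (j < n)%nat -> i <> j -> 0 < alpha_of th i + beta_of n th j) ->
  is_jacobian n A th (Jac n th).
Proof.
intros Hpos k l Hk Hl. unfold Fmap, Jac.
destruct (Nat.ltb_spec k n) as [Hkn|Hkn].
- unfold Eoutdeg.
  set (d := fun j => if j =? k then 0 else - (gg (alpha_of th k + beta_of n th j) * Dl n k j l)).
  replace (sumR n (fun j => if j =? k then 0 else gg (alpha_of th k + beta_of n th j) * Dl n k j l))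
    with (0 - sumR n d).
  + apply (derivable_pt_lim_minus (fun _ => outdeg n A k)).
    * apply derivable_pt_lim_const.
    * apply (deriv_sum n (fun j t => if j =? k then 0 else
                 fgeo (alpha_of (upd th l t) k + beta_of n (upd th l t) j)) d).
      intros j Hj. unfold d. destruct (Nat.eqb_spec j k).
      -- apply derivable_pt_lim_const.
      -- apply term_deriv2. apply Hpos; auto.
  + unfold d. rewrite Rminus_0_l, <- sumR_opp. apply sumR_ext.
    intros j _. destruct (j =? k); ring.
- unfold Eindeg.
  set (d := fun i => if i =? (k - n) then 0 else - (gg (alpha_of th i + beta_of n th (k - n)) * Dl n i (k - n) l)).
  replace (sumR n (fun i => if i =? (k - n) then 0 else gg (alpha_of th i + beta_of n th (k - n)) * Dl n i (k - n) l))
    with (0 - sumR n d).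
  + apply (derivable_pt_lim_minus (fun _ => indeg n A (k - n))).
    * apply derivable_pt_lim_const.
    * apply (deriv_sum n (fun i t => if i =? (k - n) then 0 else
                 fgeo (alpha_of (upd th l t) i + beta_of n (upd th l t) (k - n))) d).
      intros i Hi. unfold d. destruct (Nat.eqb_spec i (k - n)).
      -- apply derivable_pt_lim_const.
      -- apply term_deriv2. apply Hpos; auto; lia.
  + unfold d. rewrite Rminus_0_l, <- sumR_opp. apply sumR_ext.
    intros j _. destruct (j =? k - n); ring.
Qed.

Lemma Dl_sum n i j x : (i < 2 * n - 1)%nat -> (j < n)%nat ->
  sumR (2 * n - 1) (fun l => Dl n i j l * x l) = alpha_of x i + beta_of n x j.
Proof.
intros Hi Hj. unfold Dl.
rewrite (sumR_ext _ _ (fun l => (if l =? i then 1 else 0) * x l +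
   (if (j <? n - 1)%nat then (if l =? n + j then 1 else 0) else 0) * x l))
  by (intros; ring).
rewrite sumR_plus, sumR_delta by exact Hi. unfold alpha_of, beta_of.
destruct (Nat.ltb_spec j (n - 1)).
- rewrite sumR_delta by lia. reflexivity.
- rewrite sumR_zero; [ring|]. intros; ring.
Qed.

Lemma Jx n th x k : (k < 2 * n - 1)%nat ->
  sumR (2 * n - 1) (fun l => Jac n th k l * x l) =
  if (k <? n)%nat then
    sumR n (fun j => if j =? k then 0 else gg (alpha_of th k + beta_of n th j) * (alpha_of x k + beta_of n x j))
  else
    sumR n (fun i => if i =? (k - n) then 0 else gg (alpha_of th i + beta_of n th (k - n)) * (alpha_of x i + beta_of n x (k - n))).
Proof.
intros Hk. unfold Jac. destruct (Nat.ltb_spec k n) as [Hkn|Hkn].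
- rewrite (sumR_ext _ _ (fun l => sumR n (fun j => (if j =? k then 0 else gg (alpha_of th k + beta_of n th j) * Dl n k j l) * x l)))
    by (intros; rewrite sumR_scalr; reflexivity).
  rewrite sumR_swap. apply sumR_ext. intros j Hj. destruct (j =? k).
  + apply sumR_zero; intros; ring.
  + rewrite <- (Dl_sum n k j x) by lia. rewrite <- sumR_scal. apply sumR_ext; intros; ring.
- rewrite (sumR_ext _ _ (fun l => sumR n (fun i => (if i =? (k - n) then 0 else gg (alpha_of th i + beta_of n th (k - n)) * Dl n i (k - n) l) * x l)))
    by (intros; rewrite sumR_scalr; reflexivity).
  rewrite sumR_swap. apply sumR_ext. intros i Hi. destruct (i =? k - n).
  + apply sumR_zero; intros; ring.
  + rewrite <- (Dl_sum n i (k - n) x) by lia. rewrite <- sumR_scal. apply sumR_ext; intros; ring.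
Qed.

Lemma gg_decr a b : 0 < a -> a <= b -> gg b <= gg a.
Proof.
intros Ha Hab. unfold gg.
assert (HA : 1 < exp a) by (rewrite <- exp_0; apply exp_increasing; lra).
assert (HAB : exp a <= exp b) by (destruct (Req_dec a b); [subst; lra| apply Rlt_le, exp_increasing; lra]).
set (x := exp a) in *. set (y := exp b) in *.
assert (0 < (x - 1) ^ 2) by (apply pow_lt; lra).
assert (0 < (y - 1) ^ 2) by (apply pow_lt; lra).
apply Rmult_le_reg_r with ((x - 1) ^ 2 * (y - 1) ^ 2); [apply Rmult_lt_0_compat; lra|].
replace (y / (y - 1) ^ 2 * ((x - 1) ^ 2 * (y - 1) ^ 2)) with (y * (x - 1) ^ 2) by (field; lra).
replace (x / (x - 1) ^ 2 * ((x - 1) ^ 2 * (y - 1) ^ 2)) with (x * (y - 1) ^ 2) by (field; lra).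
assert (0 <= (y - x) * (x * y - 1)) by (apply Rmult_le_pos; nra).
nra.
Qed.

Lemma bound_main n th (m M E : R) (x Fv : nat -> R) :
  (3 <= n)%nat -> 0 < m -> m <= M -> 0 <= E ->
  (forall i j, (i < n)%nat -> (j < n)%nat -> i <> j ->
     m <= gg (alpha_of th i + beta_of n th j) <= M) ->
  (forall k, (k < 2 * n - 1)%nat -> sumR (2 * n - 1) (fun l => Jac n th k l * x l) = Fv k) ->
  (forall i, (i < n)%nat -> Rabs (Fv i) <= E) ->
  (forall j, (j < n - 1)%nat -> Rabs (Fv (n + j)%nat) <= E) ->
  Rabs (sumR n Fv - sumR (n - 1) (fun j => Fv (n + j)%nat)) <= E ->
  forall k, (k < 2 * n - 1)%nat -> Rabs (x k) <= 10 * E * M / ((INR n - 1) * m * m).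
Proof.
intros Hn Hm HmM HE Hv HJ HF1 HF2 HF3.
set (v := fun i j => gg (alpha_of th i + beta_of n th j)).
assert (Hr : forall i, (i < n)%nat ->
  sumR n (fun j => if j =? i then 0 else v i j * (x i + beta_of n x j)) = Fv i).
{ intros i Hi. rewrite <- HJ by lia. rewrite Jx by lia.
  destruct (Nat.ltb_spec i n); [reflexivity|lia]. }
assert (Hc : forall j, (j < n - 1)%nat ->
  sumR n (fun i => if i =? j then 0 else v i j * (x i + beta_of n x j)) = Fv (n + j)%nat).
{ intros j Hj. rewrite <- HJ by lia. rewrite Jx by lia.
  destruct (Nat.ltb_spec (n + j) n); [lia|].
  replace (n + j - n)%nat with j by lia. reflexivity. }
assert (Hsw : sumR n (fun i => sumR n (fun j => if j =? i then 0 else v i j * (x i + beta_of n x j))) =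
              sumR n (fun j => sumR n (fun i => if i =? j then 0 else v i j * (x i + beta_of n x j))))
  by apply swap_offdiag.
assert (Hlast : sumR n (fun i => if i =? (n - 1)%nat then 0 else v i (n - 1)%nat * (x i + beta_of n x (n - 1)%nat))
   = sumR n Fv - sumR (n - 1) (fun j => Fv (n + j)%nat)).
{ rewrite (sumR_ext n Fv _ (fun i Hi => eq_sym (Hr i Hi))).
  rewrite Hsw. replace n with (S (n - 1)) at 2 by lia. rewrite sumR_S.
  rewrite (sumR_ext (n - 1) (fun j => Fv (n + j)%nat) _ (fun j Hj => eq_sym (Hc j Hj))). ring. }
assert (Hb : beta_of n x (n - 1) = 0) by (unfold beta_of; rewrite Nat.ltb_irrefl; reflexivity).
assert (P := principle n v m M E x (beta_of n x) Hn Hm HmM HE Hv Hb).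
intros k Hk.
assert (HP : forall i, (i < n)%nat ->
    Rabs (x i) <= 10 * E * M / ((INR n - 1) * m * m) /\
    Rabs (beta_of n x i) <= 10 * E * M / ((INR n - 1) * m * m)).
{ apply P.
  - intros i Hi. rewrite Hr by exact Hi. apply HF1; auto.
  - intros j Hj. destruct (Nat.eq_dec j (n - 1)) as [->|ne].
    + rewrite Hlast. exact HF3.
    + rewrite Hc by lia. apply HF2; lia. }
destruct (Nat.ltb_spec k n).
- apply HP; auto.
- destruct (HP (k - n)%nat) as [_ H2]; [lia|].
  unfold beta_of in H2. destruct (Nat.ltb_spec (k - n) (n - 1)); [|lia].
  replace (n + (k - n))%nat with k in H2 by lia. exact H2.
Qed.

Lemma sq_le a b : 0 <= a -> 0 <= b -> a * a <= b * b -> a <= b.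
Proof. intros. nra. Qed.

Lemma P1 gamma n q : 0 < gamma -> (3 <= n)%nat -> 0 < q ->
  sqrt (8 * (INR n - 1) * ln (INR n) / (gamma * q ^ 2)) / (INR n - 1)
  <= sqrt (16 / gamma) * / q * sqrt (ln (INR n) / INR n).
Proof.
intros Hg Hn Hq.
assert (HnR : 3 <= INR n) by (replace 3 with (INR 3) by (simpl; ring); apply le_INR; lia).
assert (HL : 0 <= ln (INR n)) by (rewrite <- ln_1; apply Rlt_le, ln_increasing; lra).
set (L := ln (INR n)) in *. set (nr := INR n) in *.
assert (Hq2 : 0 < gamma * q ^ 2) by (apply Rmult_lt_0_compat; [lra|apply pow_lt; lra]).
assert (Ha : 0 <= 8 * (nr - 1) * L / (gamma * q ^ 2)).
{ apply Rmult_le_pos; [apply Rmult_le_pos; lra|apply Rlt_le, Rinv_0_lt_compat; lra]. }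
assert (Hb : 0 <= 16 / gamma) by (apply Rmult_le_pos; [lra|apply Rlt_le, Rinv_0_lt_compat; lra]).
assert (Hc : 0 <= L / nr) by (apply Rmult_le_pos; [lra|apply Rlt_le, Rinv_0_lt_compat; lra]).
assert (Hs1 := sqrt_pos (8 * (nr - 1) * L / (gamma * q ^ 2))).
assert (Hs2 := sqrt_pos (16 / gamma)).
assert (Hs3 := sqrt_pos (L / nr)).
assert (Hiq : 0 < / q) by (apply Rinv_0_lt_compat; lra).
apply sq_le.
- apply Rmult_le_pos; [lra|apply Rlt_le, Rinv_0_lt_compat; lra].
- apply Rmult_le_pos; [apply Rmult_le_pos|]; lra.
- replace (sqrt (8 * (nr - 1) * L / (gamma * q ^ 2)) / (nr - 1) *
           (sqrt (8 * (nr - 1) * L / (gamma * q ^ 2)) / (nr - 1)))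
    with ((sqrt (8 * (nr - 1) * L / (gamma * q ^ 2)) * sqrt (8 * (nr - 1) * L / (gamma * q ^ 2))) / ((nr - 1) * (nr - 1)))
    by (field; lra).
  replace (sqrt (16 / gamma) * / q * sqrt (L / nr) * (sqrt (16 / gamma) * / q * sqrt (L / nr)))
    with ((sqrt (16 / gamma) * sqrt (16 / gamma)) * (sqrt (L / nr) * sqrt (L / nr)) / (q * q))
    by (field; lra).
  rewrite !sqrt_sqrt by assumption.
  replace (8 * (nr - 1) * L / (gamma * q ^ 2) / ((nr - 1) * (nr - 1)))
    with ((8 * L) / (gamma * q * q * (nr - 1))) by (field; repeat split; lra).
  replace (16 / gamma * (L / nr) / (q * q)) with ((16 * L) / (gamma * q * q * nr)) by (field; repeat split; lra).
  assert (Hgq : 0 < gamma * q * q) by (apply Rmult_lt_0_compat; [apply Rmult_lt_0_compat|]; lra).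
  unfold Rdiv. apply Rmult_le_reg_r with (gamma * q * q * (nr - 1) * nr).
  + apply Rmult_lt_0_compat; [apply Rmult_lt_0_compat|]; lra.
  + replace (8 * L * / (gamma * q * q * (nr - 1)) * (gamma * q * q * (nr - 1) * nr)) with (8 * L * nr) by (field; split; lra).
    replace (16 * L * / (gamma * q * q * nr) * (gamma * q * q * (nr - 1) * nr)) with (16 * L * (nr - 1)) by (field; split; lra).
    nra.
Qed.

Lemma P2 q Q : 0 < q <= Q ->
  gg q / (gg Q * gg Q) <= exp (3 * Q) * (1 + / q ^ 4) + exp Q.
Proof.
intros [Hq HqQ]. unfold gg.
assert (Hx1 : 1 + q < exp q) by (apply exp_ineq1; lra).
assert (HxY : exp q <= exp Q) by (destruct (Req_dec q Q); [subst; lra|apply Rlt_le, exp_increasing; lra]).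
replace (3 * Q) with (Q + Q + Q) by ring. rewrite !exp_plus.
set (x := exp q) in *. set (y := exp Q) in *.
assert (Hy1 : 1 < y) by lra.
assert (Hey : 0 < exp Q) by apply exp_pos.
replace (x / (x - 1) ^ 2 / (y / (y - 1) ^ 2 * (y / (y - 1) ^ 2)))
  with ((x / y) * ((y - 1) ^ 2 / y) * ((y - 1) ^ 2) * / (x - 1) ^ 2) by (field; repeat split; lra).
assert (A1 : x / y <= 1) by (apply Rmult_le_reg_r with y; [lra|]; unfold Rdiv; rewrite Rmult_assoc, Rinv_l; lra).
assert (A2 : (y - 1) ^ 2 / y <= y).
{ apply Rmult_le_reg_r with y; [lra|]. unfold Rdiv. rewrite Rmult_assoc, Rinv_l by lra. nra. }
assert (A3 : / (x - 1) ^ 2 <= / q ^ 2).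
{ apply Rinv_le_contravar; [apply pow_lt; lra|]. apply pow_incr; lra. }
assert (A4 : / q ^ 2 <= 1 + / q ^ 4).
{ replace (/ q ^ 4) with (/ q ^ 2 * / q ^ 2) by (field; lra).
  assert (0 < / q ^ 2) by (apply Rinv_0_lt_compat, pow_lt; lra). nra. }
assert (P0 : 0 <= x / y) by (apply Rmult_le_pos; [lra|apply Rlt_le, Rinv_0_lt_compat; lra]).
assert (P0' : 0 <= (y - 1) ^ 2 / y) by (apply Rmult_le_pos; [apply pow2_ge_0|apply Rlt_le, Rinv_0_lt_compat; lra]).
assert (P3 : 0 <= / (x - 1) ^ 2) by (apply Rlt_le, Rinv_0_lt_compat, pow_lt; lra).
assert (S1 : x / y * ((y - 1) ^ 2 / y) <= y) by nra.
assert (Y2 : (y - 1) ^ 2 <= y * y) by nra.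
assert (S2 : x / y * ((y - 1) ^ 2 / y) * ((y - 1) ^ 2) <= y * (y * y)) by
  (apply Rmult_le_compat; try apply Rmult_le_pos; try apply pow2_ge_0; lra).
assert (S3 : x / y * ((y - 1) ^ 2 / y) * ((y - 1) ^ 2) * / (x - 1) ^ 2 <= y * (y * y) * (1 + / q ^ 4)).
{ assert (0 <= x / y * ((y - 1) ^ 2 / y) * ((y - 1) ^ 2)).
  { apply Rmult_le_pos; [apply Rmult_le_pos; lra|apply pow2_ge_0]. }
  apply Rmult_le_compat; lra. }
assert (0 < exp Q) by apply exp_pos.
replace (y * y * y) with (y * (y * y)) by ring.
lra.
Qed.
Module MC.
From mathcomp Require Import all_boot all_algebra.
From mathcomp Require Import Rstruct.
Import GRing.Theory.

Lemma sumR_big (N : nat) (g : nat -> R) : sumR N g = (\sum_(i < N) g i)%R.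
Proof.
elim: N => [|N IH]; first by rewrite big_ord0.
by rewrite big_ord_recr /= -IH sumR_S.
Qed.

Lemma inverse_exists (N : nat) (J : nat -> nat -> R) :
  (forall x : nat -> R, (forall k, lt k N -> sumR N (fun l => J k l * x l) = 0) ->
     forall k, lt k N -> x k = 0) ->
  exists B, is_inverse N J B.
Proof.
Local Open Scope ring_scope.
move=> Hinj.
pose Jm : 'M[R]_N := \matrix_(i < N, j < N) J i j.
have HU : Jm \in unitmx.
  rewrite unitmxE unitfE -det_tr.
  apply/negP => /det0P [v vn0 vJ].
  move/negP: vn0; apply; apply/eqP/rowP => i.
  pose x := fun l : nat => match @insub _ (fun l => (l < N)%N) _ l with Some i' => v ord0 i' | None => 0 end.
  have xE : forall i' : 'I_N, x i' = v ord0 i'.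
    move=> i'; rewrite /x insubT //= => H; congr (v ord0 _); exact: val_inj.
  rewrite mxE -xE; apply: Hinj; last by apply/ltP.
  move=> k /ltP kN.
  have := congr1 (fun M : 'rV[R]_N => M ord0 (Ordinal kN)) vJ.
  rewrite !mxE sumR_big => H; apply: eq_trans _ H.
  apply: eq_bigr => l _; rewrite !mxE xE /=; exact: Rmult_comm.
pose Bf := fun i k : nat => match @insub _ (fun l => (l < N)%N) _ i, @insub _ (fun l => (l < N)%N) _ k with
   Some i', Some k' => invmx Jm i' k' | _, _ => 0 end.
have BfE : forall i' k' : 'I_N, Bf i' k' = invmx Jm i' k'.
  move=> i' k'; rewrite /Bf insubT //= => H; rewrite insubT //= => H'.
  by congr (invmx Jm _ _); apply: val_inj.
exists Bf => i k /ltP iN /ltP kN.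
have -> : i = Ordinal iN by []. have -> : k = Ordinal kN by [].
split.
- rewrite sumR_big.
  have H := mulmxV HU.
  transitivity ((Jm *m invmx Jm) (Ordinal iN) (Ordinal kN)).
    rewrite mxE; apply: eq_bigr => l _; by rewrite BfE mxE.
  rewrite H mxE /=.
  have -> : (Ordinal iN == Ordinal kN) = (i == k) by [].
  case: (eqVneq i k) => [->|ne]; first by rewrite Nat.eqb_refl.
  by rewrite (proj2 (Nat.eqb_neq _ _) (elimN eqP ne)).
- rewrite sumR_big.
  have H := mulVmx HU.
  transitivity ((invmx Jm *m Jm) (Ordinal iN) (Ordinal kN)).
    rewrite mxE; apply: eq_bigr => l _; by rewrite BfE mxE.
  rewrite H mxE /=.
  have -> : (Ordinal iN == Ordinal kN) = (i == k) by [].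
  case: (eqVneq i k) => [->|ne]; first by rewrite Nat.eqb_refl.
  by rewrite (proj2 (Nat.eqb_neq _ _) (elimN eqP ne)).
Qed.
End MC.

Theorem lemma6 :
  forall gamma : R, 0 < gamma ->
  exists C : R, 0 < C /\
  forall (q Q : nat -> R) (theta : nat -> nat -> R),
    (forall n, (2 <= n)%nat -> 0 < q n <= Q n) ->
    (forall n, (2 <= n)%nat -> forall i j, (i < n)%nat -> (j < n)%nat -> i <> j ->
        q n <= alpha_of (theta n) i + beta_of n (theta n) j <= Q n) ->
    little_o_n (fun n => M_n (q n) / m_n (Q n)) ->
    exists N : nat, forall n : nat, (2 <= n)%nat -> (N <= n)%nat ->
    forall A : nat -> nat -> nat,
      (forall i, (i < n)%nat ->
         Rabs (outdeg n A i - Eoutdeg n (theta n) i)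
           <= sqrt (8 * (INR n - 1) * ln (INR n) / (gamma * q n ^ 2))) ->
      (forall j, (j < n)%nat ->
         Rabs (indeg n A j - Eindeg n (theta n) j)
           <= sqrt (8 * (INR n - 1) * ln (INR n) / (gamma * q n ^ 2))) ->
      exists J B : nat -> nat -> R,
        is_jacobian n A (theta n) J /\
        is_inverse (2 * n - 1) J B /\
        forall k, (k < 2 * n - 1)%nat ->
          Rabs (sumR (2 * n - 1) (fun l => B k l * Fmap n A (theta n) l))
            <= C * (/ q n * (exp (3 * Q n) * (1 + / q n ^ 4) + exp (Q n))
                    * sqrt (ln (INR n) / INR n)).
Proof.
intros gamma Hg.
assert (Hs16 : 0 < sqrt (16 / gamma)).
{ apply sqrt_lt_R0. apply Rmult_lt_0_compat; [lra|apply Rinv_0_lt_compat; lra]. }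
exists (10 * sqrt (16 / gamma)).
split; [lra|].
intros q Q theta Hq Hs _.
exists 3%nat.
intros n Hn2 Hn3 A Hout Hin.
destruct (Hq n Hn2) as [Hq0 HqQ].
set (th := theta n) in *.
set (Bnd := sqrt (8 * (INR n - 1) * ln (INR n) / (gamma * q n ^ 2))) in *.
set (m := gg (Q n)). set (M := gg (q n)).
assert (Hvb : forall i j, (i < n)%nat -> (j < n)%nat -> i <> j ->
     m <= gg (alpha_of th i + beta_of n th j) <= M).
{ intros i j Hi Hj Hij. destruct (Hs n Hn2 i j Hi Hj Hij) as [Hs1 Hs2]; fold th in Hs1; fold th in Hs2.
  split; apply gg_decr; lra. }
assert (Hpos : forall i j, (i < n)%nat -> (j < n)%nat -> i <> j -> 0 < alpha_of th i + beta_of n th j).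
{ intros i j Hi Hj Hij. destruct (Hs n Hn2 i j Hi Hj Hij) as [Hs1 Hs2]; fold th in Hs1; fold th in Hs2. lra. }
assert (HE1 : 1 < exp (Q n)) by (rewrite <- exp_0; apply exp_increasing; lra).
assert (Hm : 0 < m).
{ unfold m, gg. apply Rmult_lt_0_compat; [apply exp_pos|apply Rinv_0_lt_compat, pow_lt; lra]. }
assert (HmM : m <= M) by (apply gg_decr; lra).
assert (Hinj : forall x : nat -> R,
   (forall k, lt k (2 * n - 1) -> sumR (2 * n - 1) (fun l => Jac n th k l * x l) = 0) ->
   forall k, lt k (2 * n - 1) -> x k = 0).
{ intros x Hx k Hk.
  assert (H := bound_main n th m M 0 x (fun _ => 0) Hn3 Hm HmM (Rle_refl 0) Hvb Hx).
  assert (H' : Rabs (x k) <= 10 * 0 * M / ((INR n - 1) * m * m)).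
  { apply H; [intros; rewrite Rabs_R0; lra|intros; rewrite Rabs_R0; lra| |exact Hk].
    rewrite !sumR_zero by auto. rewrite Rminus_0_r, Rabs_R0. lra. }
  rewrite Rmult_0_r, !Rmult_0_l in H'. apply abs_between in H'. lra. }
destruct (MC.inverse_exists (2 * n - 1) (Jac n th) Hinj) as [B HB].
exists (Jac n th), B.
split; [apply jac_ok; exact Hpos|].
split; [exact HB|].
intros k Hk.
set (F := Fmap n A th).
set (x := fun k => sumR (2 * n - 1) (fun l => B k l * F l)).
change (Rabs (x k) <= 10 * sqrt (16 / gamma) *
   (/ q n * (exp (3 * Q n) * (1 + / q n ^ 4) + exp (Q n)) * sqrt (ln (INR n) / INR n))).
assert (HJx : forall k0, (k0 < 2 * n - 1)%nat -> sumR (2 * n - 1) (fun l => Jac n th k0 l * x l) = F k0).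
{ intros k0 Hk0. unfold x.
  rewrite (sumR_ext _ _ (fun l => sumR (2 * n - 1) (fun m0 => Jac n th k0 l * B l m0 * F m0)))
    by (intros; rewrite <- sumR_scal; apply sumR_ext; intros; ring).
  rewrite sumR_swap.
  rewrite (sumR_ext _ _ (fun m0 => (if m0 =? k0 then 1 else 0) * F m0)).
  { apply sumR_delta; exact Hk0. }
  intros m0 Hm0. rewrite sumR_scalr. destruct (HB k0 m0 Hk0 Hm0) as [H1 _].
  rewrite H1, Nat.eqb_sym. reflexivity. }
set (G := fun j => indeg n A j - Eindeg n th j).
assert (HFG1 : sumR n F = sumR n G).
{ rewrite (sumR_ext n F (fun i => outdeg n A i - Eoutdeg n th i)).
  { rewrite sumR_minus. unfold G. rewrite sumR_minus. unfold outdeg, Eoutdeg, indeg, Eindeg.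
    rewrite (swap_offdiag n (fun i j => INR (A i j))).
    rewrite (swap_offdiag n (fun i j => fgeo (alpha_of th i + beta_of n th j))). reflexivity. }
  intros i Hi. unfold F, Fmap. destruct (Nat.ltb_spec i n); [reflexivity|lia]. }
assert (HFG2 : sumR (n - 1) (fun j => F (n + j)%nat) = sumR (n - 1) G).
{ apply sumR_ext. intros j Hj. unfold F, Fmap, G.
  destruct (Nat.ltb_spec (n + j) n); [lia|]. replace (n + j - n)%nat with j by lia. reflexivity. }
assert (HF3 : Rabs (sumR n F - sumR (n - 1) (fun j => F (n + j)%nat)) <= Bnd).
{ rewrite HFG1, HFG2. replace n with (S (n - 1)) at 1 by lia. rewrite sumR_S.
  replace (sumR (n - 1) G + G (n - 1)%nat - sumR (n - 1) G) with (G (n - 1)%nat) by ring.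
  unfold G. apply Hin. lia. }
assert (HBnd0 : 0 <= Bnd) by apply sqrt_pos.
assert (Hx := bound_main n th m M Bnd x F Hn3 Hm HmM HBnd0 Hvb HJx).
assert (Hxk : Rabs (x k) <= 10 * Bnd * M / ((INR n - 1) * m * m)).
{ apply Hx; [| |exact HF3|exact Hk].
  { intros i Hi. unfold F, Fmap. destruct (Nat.ltb_spec i n); [|lia]. apply Hout; exact Hi. }
  { intros j Hj. unfold F, Fmap. destruct (Nat.ltb_spec (n + j) n); [lia|].
    replace (n + j - n)%nat with j by lia. apply Hin; lia. } }
assert (HnR : 3 <= INR n) by (replace 3 with (INR 3) by (simpl; ring); apply le_INR; lia).
assert (HP1 := P1 gamma n (q n) Hg Hn3 Hq0). fold Bnd in HP1.
assert (HP2 := P2 (q n) (Q n) (conj Hq0 HqQ)). fold m M in HP2.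
assert (Heq : 10 * Bnd * M / ((INR n - 1) * m * m) = 10 * (Bnd / (INR n - 1)) * (M / (m * m)))
  by (field; split; lra).
rewrite Heq in Hxk.
assert (Ha0 : 0 <= Bnd / (INR n - 1)) by (apply Rmult_le_pos; [lra|apply Rlt_le, Rinv_0_lt_compat; lra]).
assert (HE2 : 1 < exp (q n)) by (rewrite <- exp_0; apply exp_increasing; lra).
assert (Hb0 : 0 <= M / (m * m)) by (apply Rmult_le_pos; [unfold M, gg; apply Rlt_le, Rmult_lt_0_compat; [apply exp_pos|apply Rinv_0_lt_compat, pow_lt; lra]|apply Rlt_le, Rinv_0_lt_compat, Rmult_lt_0_compat; lra]).
assert (Hprod : Bnd / (INR n - 1) * (M / (m * m)) <=
   (sqrt (16 / gamma) * / q n * sqrt (ln (INR n) / INR n)) * (exp (3 * Q n) * (1 + / q n ^ 4) + exp (Q n)))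
  by (apply Rmult_le_compat; assumption).
replace (10 * sqrt (16 / gamma) * (/ q n * (exp (3 * Q n) * (1 + / q n ^ 4) + exp (Q n)) * sqrt (ln (INR n) / INR n)))
  with (10 * ((sqrt (16 / gamma) * / q n * sqrt (ln (INR n) / INR n)) * (exp (3 * Q n) * (1 + / q n ^ 4) + exp (Q n))))
  by ring.
eapply Rle_trans; [exact Hxk|]. rewrite Rmult_assoc.
apply Rmult_le_compat_l; [lra|exact Hprod].
Qed.
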